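(* Let $\mathbb{K}$ be a field of characteristic $0$ and let $L=\sum_{i=0}^{J}a_i(n)\sigma^i$ be a nonzero operator with $a_i(n)\in\mathbb{K}[n]$. Then the continued zero index satisfies $C_L\le J$.
   Context: $\sigma$ is the shift operator. The adjoint of $L$ acts on polynomials by $L^*(x(n))=\sum_{i=0}^J a_i(n-i)x(n-i)$. Continued zero index $C_L$: if $L^*(1)\neq0$ then $C_L=0$; if $L^*(1)=0$ then $C_L$ is the positive integer with $L^*(n^{C_L})\neq 0$ and $L^*(n^i)=0$ for $0\le i\le C_L-1$. *)

(* Defs.v *)
From HB Require Import structures.
From mathcomp Require Import all_boot all_order all_algebra.
Set Implicit Arguments. Unset Strict Implicit. Unset Printing Implicit Defensive.
Import GRing.Theory.
Local Open Scope ring_scope.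

(* The operator L = \sum_{i=0}^J a_i(n) sigma^i is represented by its order
   bound J and its coefficient family a : nat -> {poly K} (only a 0..a J used). *)
Definition adjoint_op (K : fieldType) (J : nat) (a : nat -> {poly K})
    (x : {poly K}) : {poly K} :=
  \sum_(i < J.+1) ((a i) \Po ('X - (i%:R)%:P)) * (x \Po ('X - (i%:R)%:P)).

Definition continued_zero_index (K : fieldType) (J : nat) (a : nat -> {poly K})
    (c : nat) : Prop :=
  adjoint_op J a 'X^c != 0 /\ (forall i : nat, (i < c)%N -> adjoint_op J a 'X^i = 0).

(* Main.v *)
Require Import Defs.
From HB Require Import structures.
From mathcomp Require Import all_boot all_order all_algebra.
Import GRing.Theory.
Local Open Scope ring_scope.

Lemma natr_inj0 (K : fieldType) (h : [pchar K] =i pred0) (m n : nat) :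
  (m%:R : K) = n%:R -> m = n.
Proof.
have H := (pcharf0P K).1 h.
wlog le : m n / (m <= n)%N.
  move=> W E; case: (leqP m n) => [mn|nm]; first exact: W.
  by symmetry; apply: W; [exact: ltnW|].
move=> E; apply/eqP; rewrite eqn_leq le /=.
have : ((n - m)%:R : K) == 0 by rewrite natrB // E subrr.
by rewrite H subn_eq0.
Qed.

Section S.
Variables (K : fieldType) (J : nat) (a : nat -> {poly K}).
Definition bb i := a i \Po ('X - (i%:R)%:P).
Definition ZZ k := \sum_(i < J.+1) bb i * ((-(i%:R : K))^+k)%:P.

Lemma adj_expand k : adjoint_op J a 'X^k =
  \sum_(l < k.+1) ('X^(k-l) *+ 'C(k,l)) * ZZ l.
Proof.
rewrite /adjoint_op /ZZ.
under eq_bigr => i _ do rewrite comp_Xn_poly -polyCN exprDn mulr_sumr.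
rewrite exchange_big /=; apply: eq_bigr => l _.
rewrite mulr_sumr; apply: eq_bigr => i _.
by rewrite /bb -mulrnAl mulrCA polyCN rmorphXn /= polyCN.
Qed.

Lemma ZZ0 : (forall k, (k <= J)%N -> adjoint_op J a 'X^k = 0) ->
  forall k, (k <= J)%N -> ZZ k = 0.
Proof.
move=> H k; elim/ltn_ind: k => k IH kJ.
have := H k kJ; rewrite adj_expand big_ord_recr /= subnn expr0 binn mulr1n mul1r.
rewrite big1 ?add0r // => l _.
by rewrite IH ?mulr0 // (leq_trans _ kJ) // ltnW.
Qed.

Lemma eval0 : (forall k, (k <= J)%N -> adjoint_op J a 'X^k = 0) ->
  forall q : {poly K}, (size q <= J.+1)%N ->
  \sum_(i < J.+1) bb i * (q.[-(i%:R)])%:P = 0.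
Proof.
move=> H q sq.
under eq_bigr => i _ do rewrite (horner_coef_wide _ sq) rmorph_sum mulr_sumr.
rewrite exchange_big /= big1 // => k _.
transitivity ((q`_k)%:P * ZZ k); last by rewrite (@ZZ0 H k (ltn_ord k : (k <= J)%N)) mulr0.
rewrite /ZZ mulr_sumr; apply: eq_bigr => i _.
by rewrite polyCM mulrCA.
Qed.
End S.

Lemma key (K : fieldType) (charK0 : [pchar K] =i pred0)
    (J : nat) (a : nat -> {poly K})
    (Lnz : exists i : nat, (i <= J)%N /\ a i != 0) :
  ~ (forall k, (k <= J)%N -> adjoint_op J a 'X^k = 0).
Proof.
move=> H; case: Lnz => j [jJ aj]; apply/negP: aj; rewrite negbK.
set s := iota 0 J.+1.
have us : uniq s by exact: iota_uniq.
have js : j \in s by rewrite mem_iota.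
set r := [seq (-(m%:R)) : K | m <- rem j s].
set q := \prod_(x <- r) ('X - x%:P).
have sq : (size q <= J.+1)%N by rewrite size_prod_XsubC size_map size_rem // size_iota.
have E := @eval0 K J a H q sq.
rewrite (bigD1 (Ordinal (jJ : (j < J.+1)%N))) //= big1 ?addr0 in E; last first.
  move=> i ij; apply/eqP; rewrite mulf_eq0 polyC_eq0; apply/orP; right.
  rewrite -/(root q _) root_prod_XsubC; apply/mapP; exists (nat_of_ord i) => //.
  rewrite (mem_rem_uniq _ us) inE /= mem_iota ltn_ord andbT.
  rewrite andbT; exact: ij.
have qj : q.[-(j%:R)] != 0.
  rewrite -/(root q _) root_prod_XsubC; apply/mapP => -[m].
  rewrite (mem_rem_uniq _ us) inE /= => /andP [mj _] /eqP.
  by rewrite eqr_opp => /eqP /(@natr_inj0 K charK0) e; rewrite e eqxx in mj.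
move/eqP: E; rewrite mulf_eq0 polyC_eq0 (negbTE qj) orbF /bb => /eqP bj.
have := comp_polyXaddC_K (a j) (- j%:R).
by rewrite !polyCN opprK bj comp_poly0 => <-.
Qed.

Theorem lemma2p4 (K : fieldType) (charK0 : [pchar K] =i pred0)
    (J : nat) (a : nat -> {poly K})
    (Lnz : exists i : nat, (i <= J)%N /\ a i != 0) :
  (exists c : nat, continued_zero_index J a c) /\
  (forall c : nat, continued_zero_index J a c -> (c <= J)%N).
Proof.
have K0 := @key K charK0 J a Lnz.
have ex : exists k, (k <= J)%N && (adjoint_op J a 'X^k != 0).
  have : [exists k : 'I_J.+1, adjoint_op J a 'X^k != 0].
    case: existsP => // h; exfalso; apply: K0 => k kJ; apply/eqP/negPn/negP => hk.
    by apply: h; exists (Ordinal (kJ : (k < J.+1)%N)).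
  by case/existsP => k hk; exists k; rewrite hk -ltnS ltn_ord.
split.
  case: (ex_minnP ex) => c /andP [cJ hc] minc.
  exists c; split=> // i ic; apply/eqP; apply: contraTT (ic) => hi.
  by rewrite -leqNgt; apply: minc; rewrite hi andbT; exact: (leq_trans (ltnW ic) cJ).
move=> c [nz zs]; rewrite leqNgt; apply/negP => Jc; apply: K0 => k kJ.
by apply: zs; exact: leq_ltn_trans kJ Jc.
Qed.
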